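(* The type ${\mathbf{R}_\mathbf{E}}$ of Euclidean reals is Cauchy complete: every Cauchy approximation in ${\mathbf{R}_\mathbf{E}}$ has a limit in ${\mathbf{R}_\mathbf{E}}$.
   Context: Work in univalent type theory with propositional truncation, function extensionality and propositional resizing; $\Omega$ is the type of propositions, $\exists$ and $\vee$ are truncated; a subtype of $A$ is a map $A\to\Omega$, identified with $\sum_{a:A}P(a)$. $\mathbf{Q}$ is the rationals, $\mathbf{Q}_+$ the positive rationals. For predicates $L,U:\mathbf{Q}\to\Omega$ and $x=(L,U)$ write $q<x$ for $L(q)$ and $x<r$ for $U(r)$. $x$ is a Dedekind cut if: (inhabited) $\exists q.\,q<x$ and $\exists r.\,x<r$; (rounded) $q<x\Leftrightarrow\exists q'.(q<q')\wedge(q'<x)$ and $x<r\Leftrightarrow\exists r'.(r'<r)\wedge(x<r')$; (transitive) $(q<x)\wedge(x<r)\Rightarrow q<r$; (located) $q<r\Rightarrow(q<x)\vee(x<r)$. ${\mathbf{R}_\mathbf{D}}$ is the type of Dedekind cuts, with $\mathsf{rat}(q)$ the cut with $r<\mathsf{rat}(q)\Leftrightarrow r<q$ and $\mathsf{rat}(q)<r\Leftrightarrow q<r$. Define $q<x+y:=\exists s,t.(q=s+t)\wedge(s<x)\wedge(t<y)$, $x+y<r:=\exists s,t.(r=s+t)\wedge(x<s)\wedge(y<t)$; $q<-x:=x<-q$, $-x<r:=-r<x$; $x-y:=x+(-y)$; $q<|x|:=(q<x)\vee(q<-x)$, $|x|<r:=(x<r)\wedge(-x<r)$; premetric $x\sim_\varepsilon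 y:=|x-y|<\varepsilon$ ($\varepsilon$ in the upper cut of $|x-y|$). For a premetric space $R$ (a type with $\sim:\mathbf{Q}_+\times R\times R\to\Omega$), a Cauchy approximation is $x:\mathbf{Q}_+\to R$ with $\forall\delta,\varepsilon.\,x_\delta\sim_{\delta+\varepsilon}x_\varepsilon$; $u:R$ is a limit of $x$ if $\forall\varepsilon,\theta:\mathbf{Q}_+.\,x_\varepsilon\sim_{\varepsilon+\theta}u$; $R$ is Cauchy complete if every Cauchy approximation has a limit. A subtype $S$ of ${\mathbf{R}_\mathbf{D}}$ carries the restricted premetric (elements are $\varepsilon$-close in $S$ iff they are in ${\mathbf{R}_\mathbf{D}}$). The Euclidean reals ${\mathbf{R}_\mathbf{E}}$ is the smallest subtype of ${\mathbf{R}_\mathbf{D}}$ containing $\mathsf{rat}(q)$ for all $q:\mathbf{Q}$ and Cauchy complete with respect to the restricted premetric; concretely, $u\in{\mathbf{R}_\mathbf{E}}$ iff $u\in S$ for every such subtype $S$. *)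

(* Defs.v *)
(* MathComp (rationals = mathcomp `rat`), Prop plays the role of Omega. *)
From mathcomp Require Import all_boot all_order all_algebra.
Set Implicit Arguments. Unset Strict Implicit. Unset Printing Implicit Defensive.
Import Order.TTheory GRing.Theory Num.Theory.
Local Open Scope ring_scope.

(* A pair of predicates x = (L, U) on Q: lower (q < x) and upper (x < r). *)
Record PCut := mkPCut { lower : rat -> Prop; upper : rat -> Prop }.

Definition is_dedekind (x : PCut) : Prop :=
  ((exists q, lower x q) /\ (exists r, upper x r)) /\
  (forall q, lower x q <-> exists q', q < q' /\ lower x q') /\
  (forall r, upper x r <-> exists r', r' < r /\ upper x r') /\
  (forall q r, lower x q -> upper x r -> q < r) /\
  (forall q r, q < r -> lower x q \/ upper x r).

Definition RD := {x : PCut | is_dedekind x}.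
Definition RDcut (x : RD) : PCut := proj1_sig x.

Definition padd (x y : PCut) : PCut :=
  mkPCut (fun q => exists s t, q = s + t /\ lower x s /\ lower y t)
         (fun r => exists s t, r = s + t /\ upper x s /\ upper y t).
Definition popp (x : PCut) : PCut :=
  mkPCut (fun q => upper x (- q)) (fun r => lower x (- r)).
Definition psub (x y : PCut) : PCut := padd x (popp y).
Definition pabs (x : PCut) : PCut :=
  mkPCut (fun q => lower x q \/ lower (popp x) q)
         (fun r => upper x r /\ upper (popp x) r).

Definition Qpos := {q : rat | 0 < q}.
Definition Qval (e : Qpos) : rat := proj1_sig e.
Definition Qpos_add (d e : Qpos) : Qpos :=
  exist _ (Qval d + Qval e) (addr_gt0 (proj2_sig d) (proj2_sig e)).

Definition close (eps : Qpos) (x y : RD) : Prop :=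
  upper (pabs (psub (RDcut x) (RDcut y))) (Qval eps).

Definition ratPC (q : rat) : PCut := mkPCut (fun r => r < q) (fun r => q < r).

Lemma ratPC_dedekind (q : rat) : is_dedekind (ratPC q).
Proof.
rewrite /is_dedekind /=.
split; [split|split; [|split; [|split]]].
- by exists (q - 1); rewrite ltrBlDr ltrDl.
- by exists (q + 1); rewrite ltrDl.
- move=> r; split.
  + by move=> h; exists ((r + q) / 2); have [] := midf_lt h.
  + by case=> r' [h1 h2]; apply: lt_trans h2.
- move=> r; split.
  + by move=> h; exists ((q + r) / 2); have [] := midf_lt h.
  + by case=> r' [h1 h2]; apply: lt_trans h1.
- by move=> a b h1 h2; apply: lt_trans h2.
- move=> a b hab; case: (ltrP a q) => h; [by left|right].
  exact: le_lt_trans hab.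
Qed.

Definition ratD (q : rat) : RD := exist _ (ratPC q) (ratPC_dedekind q).

Definition cauchy_approx (S : RD -> Prop) (x : Qpos -> RD) : Prop :=
  (forall d, S (x d)) /\
  (forall d e, close (Qpos_add d e) (x d) (x e)).

Definition is_limit (x : Qpos -> RD) (u : RD) : Prop :=
  forall e th : Qpos, close (Qpos_add e th) (x e) u.

Definition cauchy_complete (S : RD -> Prop) : Prop :=
  forall x : Qpos -> RD, cauchy_approx S x -> exists u, S u /\ is_limit x u.

Definition RE (u : RD) : Prop :=
  forall S : RD -> Prop,
    (forall q, S (ratD q)) -> cauchy_complete S -> S u.

(* Main.v *)
Require Import Defs.
From mathcomp Require Import all_boot all_order all_algebra.
From mathcomp Require Import ring lra.
From Stdlib Require Import ProofIrrelevance PropExtensionality FunctionalExtensionality.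
Set Implicit Arguments. Unset Strict Implicit. Unset Printing Implicit Defensive.
Import Order.TTheory GRing.Theory Num.Theory.
Local Open Scope ring_scope.

Lemma Qpos_gt0 (e : Qpos) : 0 < Qval e.
Proof. exact: proj2_sig e. Qed.

Definition mkQ (q : rat) (h : 0 < q) : Qpos := exist _ q h.

Section Cut.
Variable X : PCut.
Hypothesis hX : is_dedekind X.

Lemma lower_down p q : lower X q -> p <= q -> lower X p.
Proof.
move=> hq; rewrite le_eqVlt => /orP [/eqP -> //|hpq].
case: hX => _ [hl _]; apply/hl; by exists q.
Qed.

Lemma upper_up r r' : upper X r -> r <= r' -> upper X r'.
Proof.
move=> hr; rewrite le_eqVlt => /orP [/eqP <- //|hpq].
case: hX => _ [_ [hu _]]; apply/hu; by exists r.
Qed.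

Lemma cut_trans q r : lower X q -> upper X r -> q < r.
Proof. by case: hX => _ [_ [_ [ht _]]]; apply: ht. Qed.

Lemma cut_loc q r : q < r -> lower X q \/ upper X r.
Proof. by case: hX => _ [_ [_ [_ hl]]]; apply: hl. Qed.

Lemma approx_loc th : 0 < th -> exists b, lower X b /\ upper X (b + th).
Proof.
move=> hth.
case: hX => [[[q0 hq0] [r0 hr0]] _].
set c := th / 3.
have hc : 0 < c by rewrite /c; lra.
have h0 : 0 <= (r0 - q0) / c.
  have := cut_trans hq0 hr0 => ?; apply: divr_ge0; lra.
have := archi_boundP h0.
move: (Num.bound _) => n hn.
have hn' : r0 - q0 <= n%:R * c.
  by move: hn; rewrite ltr_pdivrMr // => /ltW.
elim: n q0 hq0 hn' {hn h0} => [|n IH] q hq hn.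
  have := cut_trans hq hr0 => ?; move: hn; rewrite mulr0n mul0r => ?; lra.
have hqr := cut_trans hq hr0.
case: (lerP (r0 - q) th) => hle.
  exists q; split => //; apply: upper_up hr0 _; lra.
have : q + c < q + 2 * c by lra.
move/cut_loc => [hl|hu].
  apply: (IH (q + c)) => //.
  move: hn; rewrite -natr1 mulrDl mul1r => ?; lra.
exists q; split => //; apply: upper_up hu _; rewrite /c; lra.
Qed.
End Cut.
Arguments lower_down {X} hX {p q}.
Arguments upper_up {X} hX {r r'}.
Arguments cut_trans {X} hX {q r}.
Arguments cut_loc {X} hX {q r}.
Arguments approx_loc {X} hX {th}.

Section Close.
Variables (eps : rat) (X Y : PCut).
Hypotheses (hX : is_dedekind X) (hY : is_dedekind Y).
Hypothesis hc : upper (pabs (psub X Y)) eps.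

Lemma closeL1 q : lower Y q -> lower X (q - eps).
Proof.
move: hc => /= [_ [s [t [e [hs ht]]]]] hq.
have := cut_trans hY hq ht => ?.
apply: (lower_down hX hs); lra.
Qed.

Lemma closeL2 q : lower X q -> lower Y (q - eps).
Proof.
move: hc => /= [[s [t [e [hs ht]]]] _] hq.
have := cut_trans hX hq hs => ?.
apply: (lower_down hY ht); lra.
Qed.

Lemma closeU1 r : upper Y r -> upper X (r + eps).
Proof.
move: hc => /= [[s [t [e [hs ht]]]] _] hr.
have := cut_trans hY ht hr => ?.
apply: (upper_up hX hs); lra.
Qed.

Lemma closeU2 r : upper X r -> upper Y (r + eps).
Proof.
move: hc => /= [_ [s [t [e [hs ht]]]]] hr.
have := cut_trans hX hs hr => ?.
apply: (upper_up hY ht); lra.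
Qed.
End Close.

Lemma closeI (eps eta : rat) (X Y : PCut) : is_dedekind X -> is_dedekind Y ->
  0 < eta ->
  (forall r, upper Y r -> upper X (r + eps - eta)) ->
  (forall q, lower Y q -> lower X (q - eps + eta)) ->
  upper (pabs (psub X Y)) eps.
Proof.
move=> hX hY heta hU hL.
have [b [hb1 hb2]] := approx_loc hY heta.
split => /=.
  exists (b + eps), (- b); split; first ring.
  split; last by rewrite opprK.
  apply: (upper_up hX (hU _ hb2)); lra.
exists (b - eps + eta), (- (b + eta)); split; first ring.
split; last by rewrite opprK.
exact: hL.
Qed.

Definition xc (x : Qpos -> RD) e := RDcut (x e).

Lemma xc_ded x e : is_dedekind (xc x e).
Proof. exact: proj2_sig (x e). Qed.

Definition limPC (x : Qpos -> RD) : PCut :=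
  mkPCut (fun q => exists e th : Qpos, lower (xc x e) (q + Qval e + Qval th))
         (fun r => exists e th : Qpos, upper (xc x e) (r - Qval e - Qval th)).

Section Lim.
Variable x : Qpos -> RD.
Hypothesis hx : forall d e, close (Qpos_add d e) (x d) (x e).

Lemma cL d e q : lower (xc x e) q -> lower (xc x d) (q - (Qval d + Qval e)).
Proof. exact: (closeL1 (xc_ded x d) (xc_ded x e) (hx d e)). Qed.

Lemma cU d e r : upper (xc x e) r -> upper (xc x d) (r + (Qval d + Qval e)).
Proof. exact: (closeU1 (xc_ded x d) (xc_ded x e) (hx d e)). Qed.

Lemma lim_ded : is_dedekind (limPC x).
Proof.
have h1 : (0 : rat) < 1 := ltr01.
set one := mkQ h1.
have hd := fun e => xc_ded x e.
split; [split|split; [|split; [|split]]].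
- case: (hd one) => [[[q0 hq0] _] _].
  exists (q0 - 2); exists one, one; apply: (lower_down (hd one) hq0) => /=; lra.
- case: (hd one) => [[_ [r0 hr0]] _].
  exists (r0 + 2); exists one, one; apply: (upper_up (hd one) hr0) => /=; lra.
- move=> q; split.
  + move=> [e [th h]]; have hth := Qpos_gt0 th.
    have h2 : 0 < Qval th / 2 by lra.
    exists (q + Qval th / 2); split; first lra.
    exists e, (mkQ h2); apply: (lower_down (hd e) h) => /=; lra.
  + move=> [q' [hqq' [e [th h]]]]; have hth := Qpos_gt0 th.
    have h2 : 0 < Qval th + (q' - q) by lra.
    exists e, (mkQ h2); apply: (lower_down (hd e) h) => /=; lra.
- move=> r; split.
  + move=> [e [th h]]; have hth := Qpos_gt0 th.
    have h2 : 0 < Qval th / 2 by lra.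
    exists (r - Qval th / 2); split; first lra.
    exists e, (mkQ h2); apply: (upper_up (hd e) h) => /=; lra.
  + move=> [r' [hrr' [e [th h]]]]; have hth := Qpos_gt0 th.
    have h2 : 0 < Qval th + (r - r') by lra.
    exists e, (mkQ h2); apply: (upper_up (hd e) h) => /=; lra.
- move=> q r [e [th hl]] [d [et hu]].
  have := cut_trans (hd d) (cL d hl) hu.
  have := Qpos_gt0 th; have := Qpos_gt0 et; lra.
- move=> q r hqr.
  have hdl : 0 < (r - q) / 5 by lra.
  set dl := mkQ hdl.
  have : q + (r - q) / 5 + (r - q) / 5 < r - (r - q) / 5 - (r - q) / 5 by lra.
  move/(cut_loc (hd dl)) => [h|h]; [left|right]; exists dl, dl => //.
Qed.

Definition limD : RD := exist _ (limPC x) lim_ded.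

Lemma lim_is : is_limit x limD.
Proof.
move=> e th; rewrite /close.
have hth := Qpos_gt0 th; have he := Qpos_gt0 e.
apply: (closeI (xc_ded x e) lim_ded hth).
- move=> r [d [z h]]; have hz := Qpos_gt0 z.
  apply: (upper_up (xc_ded x e) (cU e h)) => /=; lra.
- move=> q [d [z h]]; have hz := Qpos_gt0 z.
  apply: (lower_down (xc_ded x e) (cL e h)) => /=; lra.
Qed.
End Lim.

Lemma lim_sub (x : Qpos -> RD) u v : is_limit x u -> is_limit x v ->
  (forall q, lower (RDcut u) q -> lower (RDcut v) q) /\
  (forall r, upper (RDcut u) r -> upper (RDcut v) r).
Proof.
move=> hu hv.
have du : is_dedekind (RDcut u) := proj2_sig u.
have dv : is_dedekind (RDcut v) := proj2_sig v.
split.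
- move=> q hq.
  case: du => _ [hl _]; move: hq => /hl [q' [hqq' hq']].
  have hd : 0 < (q' - q) / 4 by lra.
  set dl := mkQ hd.
  have h1 := closeL1 (xc_ded x dl) (proj2_sig u) (hu dl dl) hq'.
  have h2 := closeL2 (xc_ded x dl) (proj2_sig v) (hv dl dl) h1.
  apply: (lower_down dv h2) => /=; lra.
- move=> r hr.
  case: du => _ [_ [hU _]]; move: hr => /hU [r' [hrr' hr']].
  have hd : 0 < (r - r') / 4 by lra.
  set dl := mkQ hd.
  have h1 := closeU1 (xc_ded x dl) (proj2_sig u) (hu dl dl) hr'.
  have h2 := closeU2 (xc_ded x dl) (proj2_sig v) (hv dl dl) h1.
  apply: (upper_up dv h2) => /=; lra.
Qed.

Lemma lim_unique (x : Qpos -> RD) u v : is_limit x u -> is_limit x v -> u = v.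
Proof.
move=> hu hv.
have [a1 b1] := lim_sub hu hv.
have [a2 b2] := lim_sub hv hu.
move: u v hu hv a1 b1 a2 b2 => [[lu uu] pu] [[lv uv] pv] /= _ _ a1 b1 a2 b2.
have el : lu = lv.
  by apply: functional_extensionality => q; apply: propositional_extensionality; split; [apply: a1|apply: a2].
have eu : uu = uv.
  by apply: functional_extensionality => q; apply: propositional_extensionality; split; [apply: b1|apply: b2].
subst; f_equal; apply: proof_irrelevance.
Qed.

Theorem lemma2p27 : cauchy_complete RE.
Proof.
move=> x [hRE hc].
exists (limD hc); split; last exact: lim_is.
move=> S hS hSc.
have [w [hw hl]] := hSc x (conj (fun d => hRE d S hS hSc) hc).
by rewrite (lim_unique (lim_is hc) hl).
Qed.
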